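(* Assume Assumption 1, Assumption 2 and the null hypothesis $H_0:\ T_i(1)=T_i(0)$ for all $i$, and condition on $\boldsymbol{T}(1),\boldsymbol{T}(0)$. Then for any time $t\ge 0$ and integers $A,B$, $$\Pr\{\overline{D}_1(t)=A,\overline{N}_1(t)=B\mid\boldsymbol{T}(1),\boldsymbol{T}(0),\Delta_i\mathbb{1}(W_i=t),\mathbb{1}(W_i\ge t),1\le i\le n\}=\binom{\overline{D}(t)}{A}\binom{\overline{N}(t)-\overline{D}(t)}{B-A}\{\phi(t)\}^B\{1-\phi(t)\}^{\overline{N}(t)-B}.$$
   Context: There are $n$ units. Unit $i$ has potential event times $T_i(1),T_i(0)\ge 0$, potential censoring times $C_i(1),C_i(0)\in[0,\infty]$, and treatment indicator $Z_i\in\{0,1\}$; bold letters denote $n$-vectors. Assumption 1: conditional on $\boldsymbol{T}(1),\boldsymbol{T}(0),\boldsymbol{C}(1),\boldsymbol{C}(0)$, the $Z_i$ are i.i.d. Bernoulli$(p_1)$, $p_1=1-p_0\in(0,1)$. Assumption 2: $(\boldsymbol{C}(1),\boldsymbol{C}(0))$ is independent of $(\boldsymbol{T}(1),\boldsymbol{T}(0))$ and the pairs $(C_i(1),C_i(0))$ are i.i.d. across $i$. $G_z(c)=\Pr(C_i(z)\ge c)$, $\phi(t)=p_1G_1(t)/\{p_1G_1(t)+p_0G_0(t)\}$. Realized: $T_i=Z_iT_i(1)+(1-Z_i)T_i(0)$, $C_i=Z_iC_i(1)+(1-Z_i)C_i(0)$, $W_i=\min\{T_i,C_i\}$, $\Delta_i=\mathbb{1}(T_i\le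 C_i)$. $\overline{N}_1(t)=\sum_iZ_i\mathbb{1}(W_i\ge t)$, $\overline{N}(t)=\sum_i\mathbb{1}(W_i\ge t)$, $\overline{D}_1(t)=\sum_iZ_i\Delta_i\mathbb{1}(W_i=t)$, $\overline{D}(t)=\sum_i\Delta_i\mathbb{1}(W_i=t)$. Binomial coefficients $\binom{a}{b}$ are $0$ when $b<0$ or $b>a$. *)

(* Defs.v *)
From HB Require Import structures.
From mathcomp Require Import all_boot all_order all_algebra.
From mathcomp Require Import all_classical all_reals all_analysis measurable_realfun.
Set Implicit Arguments. Unset Strict Implicit. Unset Printing Implicit Defensive.
Import Order.TTheory GRing.Theory Num.Theory.
Local Open Scope classical_set_scope.
Local Open Scope ring_scope.

Definition binz {R : nzRingType} (a : nat) (b : int) : R :=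
  match b with Posz k => ('C(a, k))%:R | Negz _ => 0 end.

Definition mutual_indep {d} {Om : measurableType d} {R : realType}
  (P : probability Om R) {I : finType} (F : I -> set (set Om)) : Prop :=
  forall (J : {set I}) (E : I -> set Om), (forall i, i \in J -> F i (E i)) ->
    P (\big[setI/setT]_(i in J) E i) = (\prod_(i in J) P (E i))%E.

Definition preimg_class {d d'} {Om : measurableType d} {T : measurableType d'}
  (X : Om -> T) : set (set Om) := [set X @^-1` B | B in measurable].

Definition Cpair {Om : Type} {R : realType} {n : nat} (C1 C0 : 'I_n -> Om -> \bar R)
  (i : 'I_n) (w : Om) : \bar R * \bar R := (C1 i w, C0 i w).

Definition unit_classes {d} {Om : measurableType d} {R : realType} {n : nat}
  (Z : 'I_n -> Om -> bool) (C1 C0 : 'I_n -> Om -> \bar R) (k : 'I_n + 'I_n)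
  : set (set Om) :=
  match k with
  | inl i => preimg_class (Z i)
  | inr i => preimg_class (Cpair C1 C0 i)
  end.

Section Observables.
Context {Om : Type} {R : realType} {n : nat}.
Variables (T1 T0 : 'I_n -> R) (Z : 'I_n -> Om -> bool) (C1 C0 : 'I_n -> Om -> \bar R).

Definition Tobs (i : 'I_n) (w : Om) : R := if Z i w then T1 i else T0 i.
Definition Cobs (i : 'I_n) (w : Om) : \bar R := if Z i w then C1 i w else C0 i w.
Definition Wobs (i : 'I_n) (w : Om) : \bar R := Order.min (Tobs i w)%:E (Cobs i w).
Definition Deltaobs (i : 'I_n) (w : Om) : bool := ((Tobs i w)%:E <= Cobs i w)%E.

Definition obs (t : R) (i : 'I_n) (w : Om) : bool * bool :=
  (Deltaobs i w && (Wobs i w == t%:E), (t%:E <= Wobs i w)%E).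

Definition D1bar (t : R) (w : Om) : nat := \sum_(i < n) (Z i w && (obs t i w).1).
Definition N1bar (t : R) (w : Om) : nat := \sum_(i < n) (Z i w && (obs t i w).2).
Definition Dbar (t : R) (w : Om) : nat := \sum_(i < n) (obs t i w).1.
Definition Nbar (t : R) (w : Om) : nat := \sum_(i < n) (obs t i w).2.
End Observables.

Definition phi {R : realType} (p1 : R) (G1 G0 : R -> R) (t : R) : R :=
  p1 * G1 t / (p1 * G1 t + (1 - p1) * G0 t).

(* Main.v *)
Require Import Defs.
From HB Require Import structures.
From mathcomp Require Import all_boot all_order all_algebra.
From mathcomp Require Import all_classical all_reals all_analysis measurable_realfun.
From mathcomp Require Import ring zify.
Import Order.TTheory GRing.Theory Num.Theory.
Local Open Scope classical_set_scope.
Local Open Scope ring_scope.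


Set Implicit Arguments. Unset Strict Implicit. Unset Printing Implicit Defensive.

Section Comb.
Variable R : comNzRingType.

Definition binw (r0 r1 : R) (m k : nat) : R := ('C(m,k))%:R * r1 ^+ k * r0 ^+ (m - k).

Lemma binw0 r0 r1 m : binw r0 r1 m.+1 0 = r0 * binw r0 r1 m 0.
Proof. by rewrite /binw !bin0 !subn0 exprS; ring. Qed.

Lemma binwSS r0 r1 m k :
  binw r0 r1 m.+1 k.+1 = r0 * binw r0 r1 m k.+1 + r1 * binw r0 r1 m k.
Proof.
rewrite /binw binS natrD subSS.
case: (ltnP k m) => hk.
  have -> : (m - k = (m - k.+1).+1)%N by rewrite subnSK.
  by rewrite !exprS; ring.
rewrite (@bin_small m k.+1) ?ltnS // exprS; ring.
Qed.

Lemma binw_0k r0 r1 k : binw r0 r1 0 k = (k == 0%N)%:R.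
Proof. by case: k => [|k]; rewrite /binw ?bin0 ?bin_small //= ?mul1r ?mul0r; ring. Qed.

Definition fcons n (b : bool) (g : {ffun 'I_n -> bool}) : {ffun 'I_n.+1 -> bool} :=
  [ffun i => if unlift ord0 i is Some j then g j else b].

Lemma fcons0 n b (g : {ffun 'I_n -> bool}) : fcons b g ord0 = b.
Proof. by rewrite /fcons ffunE unlift_none. Qed.

Lemma fconsS n b (g : {ffun 'I_n -> bool}) j : fcons b g (lift ord0 j) = g j.
Proof. by rewrite /fcons ffunE liftK. Qed.

Lemma sum_ffunS n (F : {ffun 'I_n.+1 -> bool} -> R) :
  \sum_f F f = \sum_(b : bool) \sum_(g : {ffun 'I_n -> bool}) F (fcons b g).
Proof.
rewrite pair_big /=.
rewrite (reindex (fun p : bool * {ffun 'I_n -> bool} => fcons p.1 p.2)) //=.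
apply: onW_bij.
exists (fun f : {ffun 'I_n.+1 -> bool} => (f ord0, [ffun j => f (lift ord0 j)])).
  by case=> b g /=; rewrite fcons0; congr pair; apply/ffunP => j; rewrite ffunE fconsS.
move=> f /=; apply/ffunP => i; rewrite /fcons ffunE.
by case: unliftP => [j ->|->]; rewrite ?ffunE.
Qed.

Lemma comb n (a : 'I_n -> bool -> R) (d u : 'I_n -> bool) r0 r1 :
  (forall i, d i -> u i) -> (forall i, u i -> a i false = r0 /\ a i true = r1) ->
  forall k c,
  \sum_(z : {ffun 'I_n -> bool})
     (if ((\sum_i (z i && d i))%N == k) && ((\sum_i (z i && u i && ~~ d i))%N == c)
      then \prod_i a i (z i) else 0)
  = binw r0 r1 (\sum_i d i) k * binw r0 r1 (\sum_i (u i && ~~ d i)) c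
    * \prod_(i | ~~ u i) (a i false + a i true).
Proof.
elim: n a d u => [|n IH] a d u hdu hu k c.
  rewrite !big_ord0 !binw_0k ?mulr1.
  transitivity (\sum_(z : {ffun 'I_0 -> bool}) (if (0%N == k) && (0%N == c) then (1:R) else 0)).
    by apply: eq_bigr => z _; rewrite !big_ord0.
  case: k => [|k]; case: c => [|c] //=; try by rewrite big1 ?mul0r ?mulr0.
  by rewrite sumr_const card_ffun card_ord expn0 mulr1.
rewrite sum_ffunS big_bool /=.
pose a' j := a (lift ord0 j); pose d' j := d (lift ord0 j); pose u' j := u (lift ord0 j).
have hdu' : forall j, d' j -> u' j by move=> j; apply: hdu.
have hu' : forall j, u' j -> a' j false = r0 /\ a' j true = r1 by move=> j; apply: hu.
have E b k' c' : \sum_(g : {ffun 'I_n -> bool})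
   (if ((\sum_(i < n.+1) (fcons b g i && d i))%N == k') &&
       ((\sum_(i < n.+1) (fcons b g i && u i && ~~ d i))%N == c')
    then \prod_(i < n.+1) a i (fcons b g i) else 0)
  = a ord0 b * \sum_(g : {ffun 'I_n -> bool})
   (if (((b && d ord0) + \sum_i (g i && d' i))%N == k') &&
       (((b && u ord0 && ~~ d ord0) + \sum_i (g i && u' i && ~~ d' i))%N == c')
    then \prod_i a' i (g i) else 0).
  rewrite mulr_sumr; apply: eq_bigr => g _.
  have S (F : bool -> 'I_n.+1 -> nat) : (\sum_(i < n.+1) F (fcons b g i) i
      = F b ord0 + \sum_(i < n) F (g i) (lift ord0 i))%N.
    by rewrite big_ord_recl fcons0; congr (_ + _)%N; apply: eq_bigr => j _; rewrite fconsS.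
  have P : \prod_(i < n.+1) a i (fcons b g i) = a ord0 b * \prod_(i < n) a' i (g i).
    by rewrite big_ord_recl fcons0; congr (_ * _); apply: eq_bigr => j _; rewrite fconsS.
  rewrite (S (fun x i => x && d i)) (S (fun x i => x && u i && ~~ d i)) P.
  by case: ifP; rewrite ?mulr0.
rewrite !E {E}.
have hprod : \prod_(i < n.+1 | ~~ u i) (a i false + a i true)
   = (if u ord0 then 1 else a ord0 false + a ord0 true)
     * \prod_(i < n | ~~ u' i) (a' i false + a' i true).
  by rewrite big_mkcond big_ord_recl /= -big_mkcond; case: (u ord0).
rewrite hprod !big_ord_recl /=.
have hd0 := hdu ord0; have hu0 := hu ord0.
case Hu: (u ord0) hd0 hu0 => hd0 hu0; last first.
  have -> : d ord0 = false by apply/negP => /hd0.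
  rewrite /= !add0n IH // -mulrDl; ring.
have [-> ->] := hu0 isT.
case Hd: (d ord0) => /=.
- under [X in r1 * X]eq_bigr => g _ do rewrite add1n add0n.
  under [X in r0 * X]eq_bigr => g _ do rewrite !add0n.
  rewrite !add0n add1n.
  case: k => [|k].
    rewrite [X in r1 * X]big1 ?mulr0 ?add0r; last by [].
    rewrite IH // binw0 /a' /d' /u'; ring.
  under [X in r1 * X]eq_bigr => g _ do rewrite eqSS.
  rewrite !IH // binwSS /a' /d' /u'; ring.
- under [X in r1 * X]eq_bigr => g _ do rewrite add1n add0n.
  under [X in r0 * X]eq_bigr => g _ do rewrite !add0n.
  rewrite !add0n add1n.
  case: c => [|c].
    rewrite [X in r1 * X]big1 ?mulr0 ?add0r; last by move=> g _; rewrite andbF.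
    rewrite IH // binw0 /a' /d' /u'; ring.
  under [X in r1 * X]eq_bigr => g _ do rewrite eqSS.
  rewrite !IH // binwSS /a' /d' /u'; ring.
Qed.
End Comb.

Lemma bigcapE (T : Type) (I : finType) (E : I -> set T) :
  \big[setI/setT]_(k in [set: I]%SET) E k = [set w | forall k, E k w].
Proof.
apply/seteqP; split => w.
  move=> H k; move: H; rewrite (bigD1 k) ?in_setT //; by case.
move=> H; elim/big_ind: _ => //; by move=> X Y Xw Yw; split.
Qed.

Lemma meas_set1_bool (b : bool) : measurable [set b].
Proof. by []. Qed.

Lemma meas_ge (R : realType) (t : R) : measurable [set c : \bar R | (t%:E <= c)%E].
Proof.
have -> : [set c : \bar R | (t%:E <= c)%E] = [set` Interval (BLeft t%:E) (BInfty _ false)].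
  by apply/seteqP; split => c /=; rewrite in_itv /= andbT.
exact: emeasurable_itv.
Qed.

Lemma meas_g (R : realType) (t : R) (Y : eqType) (g : bool -> Y) y :
  measurable [set c : \bar R | g (t%:E <= c)%E = y].
Proof.
have m := meas_ge t.
pose S1 := [set c : \bar R | (t%:E <= c)%E].
have -> : [set c : \bar R | g (t%:E <= c)%E = y] =
  if g true == y then (if g false == y then setT else S1)
  else (if g false == y then ~` S1 else set0).
  case E1: (g true == y); case E0: (g false == y);
  apply/seteqP; split => c /=; rewrite /S1 /=; case: (t%:E <= c)%E => /=;
  try solve [done | by case | by move=> /eqP; rewrite ?E0 ?E1 | by move=> _; apply/eqP; rewrite ?E1 ?E0].
case: (g true == y); case: (g false == y) => //.
exact: measurableC.
Qed.

Lemma fin_add (R : realType) d (Om : measurableType d) (P : probability Om R)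
  (I : finType) (F : I -> set Om) (Q : pred I) :
  (forall i, measurable (F i)) -> (forall i j, i != j -> F i `&` F j = set0) ->
  P (\bigcup_(i in [set` Q]) F i) = (\sum_(i | Q i) P (F i))%E.
Proof.
move=> mF dF; rewrite measure_fin_bigcup //.
- rewrite -(@bigfs _ _ _ _ (index_enum I)) //; first exact: index_enum_uniq.
  by move=> i _; rewrite mem_index_enum.
- move=> i j _ _ [w [Hi Hj]]; apply/eqP/negPn/negP => /dF /seteqP [+ _].
  by move=> /(_ w) /=; apply.
Qed.

Unset Implicit Arguments. Set Strict Implicit. Set Printing Implicit Defensive.

Theorem lemmaA2 (R : realType) (d : measure_display) (Om : measurableType d)
  (P : probability Om R) (n : nat) (p1 : R) (G1 G0 : R -> R)
  (T1 T0 : 'I_n -> R) (Z : 'I_n -> Om -> bool) (C1 C0 : 'I_n -> Om -> \bar R) :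
  0 < p1 < 1 ->
  (forall i, 0 <= T1 i) -> (forall i, 0 <= T0 i) ->
  (forall i w, (0 <= C1 i w)%E) -> (forall i w, (0 <= C0 i w)%E) ->
  (forall i, measurable_fun setT (Z i)) ->
  (forall i, measurable_fun setT (C1 i)) ->
  (forall i, measurable_fun setT (C0 i)) ->
  (* Assumptions 1 and 2: Z_1,...,Z_n and the pairs (C_i(1),C_i(0)) are
     mutually independent, Z_i ~ Bernoulli(p1), pairs identically distributed *)
  (forall i, P [set w | Z i w] = p1%:E) ->
  mutual_indep P (unit_classes Z C1 C0) ->
  (forall i j (B : set (\bar R * \bar R)), measurable B ->
     P (Cpair C1 C0 i @^-1` B) = P (Cpair C1 C0 j @^-1` B)) ->
  (forall i (c : R), P [set w | (c%:E <= C1 i w)%E] = (G1 c)%:E) ->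
  (forall i (c : R), P [set w | (c%:E <= C0 i w)%E] = (G0 c)%:E) ->
  (* null hypothesis *)
  (forall i, T1 i = T0 i) ->
  forall (t : R), 0 <= t -> forall (A B : int) (x : {ffun 'I_n -> bool * bool}),
  let Ecnd := [set w | forall i, obs T1 T0 Z C1 C0 t i w = x i] in
  let Dx := (\sum_(i < n) (x i).1)%N in
  let Nx := (\sum_(i < n) (x i).2)%N in
  (0 < P Ecnd)%E ->
  fine (P ([set w | (D1bar T1 T0 Z C1 C0 t w)%:Z = A /\
                    (N1bar T1 T0 Z C1 C0 t w)%:Z = B] `&` Ecnd)) / fine (P Ecnd)
  = binz Dx A * binz (Nx - Dx) (B - A)
    * (phi p1 G1 G0 t) ^ B * (1 - phi p1 G1 G0 t) ^ (Nx%:Z - B).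
Proof.
move=> hp hT1 hT0 hC1p hC0p mZ mC1 mC0 hZ hind hid hG1 hG0 hnull t ht A B x Ecnd Dx Nx hpos.
pose obsf (T : R) (c : \bar R) :=
  (((T%:E <= c)%E && (Order.min T%:E c == t%:E)), (t%:E <= Order.min T%:E c)%E).
have obsE i w : obs T1 T0 Z C1 C0 t i w = obsf (T1 i) (if Z i w then C1 i w else C0 i w).
  by rewrite /obs /Deltaobs /Wobs /Tobs /Cobs -hnull; case: (Z i w).
have obsfE T c : obsf T c = ((T == t) && (t%:E <= c)%E, (t <= T) && (t%:E <= c)%E).
  rewrite /obsf le_min lee_fin minEle; case: ifPn => h.
    by rewrite eqe; congr pair; case: eqP => [<-|] //=; rewrite h.
  congr pair; case: (T =P t) => [Tt|] //=; rewrite Tt in h.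
  by apply/esym/negbTE.
pose Sx i := [set c : \bar R | obsf (T1 i) c = x i].
have SxE i : Sx i = [set c | (fun b => ((T1 i == t) && b, (t <= T1 i) && b)) (t%:E <= c)%E = x i].
  by apply/seteqP; split => c; rewrite /Sx /= obsfE.
have mSx i : measurable (Sx i) by rewrite SxE; exact: (meas_g t (fun b => ((T1 i == t) && b, (t <= T1 i) && b)) (x i)).
pose Cp i := Cpair C1 C0 i.
have mCp i : measurable_fun [set: Om] (Cp i) by exact: (measurable_fun_pair (mC1 i) (mC0 i)).
pose Sb i (b : bool) := [set p : \bar R * \bar R | Sx i (if b then p.1 else p.2)].
have mSb i b : measurable (Sb i b).
  case: b.
    have -> : Sb i true = fst @^-1` Sx i by [].
    rewrite -[_ @^-1` _]setTI; exact: measurable_fst.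
  have -> : Sb i false = snd @^-1` Sx i by [].
  rewrite -[_ @^-1` _]setTI; exact: measurable_snd.
pose EZ i b := Z i @^-1` [set b].
have mEZ i b : measurable (EZ i b) by rewrite /EZ -[_ @^-1` _]setTI; exact: mZ.
pose EC i b := Cp i @^-1` Sb i b.
have mEC i b : measurable (EC i b) by rewrite /EC -[_ @^-1` _]setTI; exact: mCp.
have fP E : measurable E -> P E = (fine (P E))%:E.
  by move=> mE; rewrite fineK // fin_num_measure.
pose a i b := fine (P (EZ i b)) * fine (P (EC i b)).
pose Ez (z : {ffun 'I_n -> bool}) := [set w | forall i, EZ i (z i) w /\ EC i (z i) w].
pose Ek (z : {ffun 'I_n -> bool}) (k : 'I_n + 'I_n) :=
  match k with inl i => EZ i (z i) | inr i => EC i (z i) end.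
have EzE z : Ez z = \big[setI/setT]_(k in (finset.setT : {set 'I_n + 'I_n})) Ek z k.
  rewrite bigcapE; apply/seteqP; split => w /=.
    by move=> H [i|i] /=; case: (H i).
  by move=> H i; exact: (conj (H (inl i)) (H (inr i))).
have mEz z : measurable (Ez z).
  by rewrite EzE; apply: bigsetI_measurable => -[i|i] _ /=.
have PEz z : P (Ez z) = (\prod_i a i (z i))%:E.
  rewrite EzE hind; last first.
    move=> [i|i] _ /=; first by exists [set z i].
    by exists (Sb i (z i)).
  rewrite (eq_bigl _ _ (fun k => finset.in_setT k)).
  rewrite big_sumType /=.
  rewrite (eq_bigr (fun i => (fine (P (EZ i (z i))))%:E)); last by move=> i _; rewrite -fP.
  rewrite [X in (_ * X)%E](eq_bigr (fun i => (fine (P (EC i (z i))))%:E)); last by move=> i _; rewrite -fP.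
  by rewrite !prodEFin -EFinM -big_split.
have disj z z' : z != z' -> Ez z `&` Ez z' = set0.
  move=> nz; apply/seteqP; split => // w [H H']; apply: (negP nz); apply/eqP/ffunP => i.
  by have [h _] := H i; have [h' _] := H' i; rewrite -h -h'.
have EzP z w : Ez z w -> forall i, Z i w = z i /\ obs T1 T0 Z C1 C0 t i w = x i.
  move=> H i; have [h1 h2] := H i; split => //; rewrite obsE h1; exact: h2.
have EzI w : Ecnd w -> Ez [ffun i => Z i w] w.
  move=> H i; rewrite ffunE; split => //.
  have := H i; rewrite obsE.
  by case: (Z i w) => h; exact: h.
have Ecnd_eq : Ecnd = \bigcup_(z in [set` (xpredT : pred {ffun 'I_n -> bool})]) Ez z.
  apply/seteqP; split => w.
    by move=> H; exists [ffun i => Z i w] => //; exact: EzI.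
  by move=> [z _ Hz] i; have := EzP z w Hz i; case.
have Pden : fine (P Ecnd) = \prod_i (a i true + a i false).
  rewrite Ecnd_eq (fin_add P _ mEz disj).
  rewrite (eq_bigr _ (fun z _ => PEz z)) sumEFin /=.
  rewrite -bigA_distr_bigA; apply: eq_bigr => i _; by rewrite big_bool.
pose condz (z : {ffun 'I_n -> bool}) :=
  ((\sum_i (z i && (x i).1))%:Z == A) && ((\sum_i (z i && (x i).2))%:Z == B).
have key z w : Ez z w -> D1bar T1 T0 Z C1 C0 t w = (\sum_i (z i && (x i).1))%N /\
                          N1bar T1 T0 Z C1 C0 t w = (\sum_i (z i && (x i).2))%N.
  by move=> Hz; split; apply: eq_bigr => i _; have [-> ->] := EzP z w Hz i.
have Num_eq : [set w | (D1bar T1 T0 Z C1 C0 t w)%:Z = A /\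
                    (N1bar T1 T0 Z C1 C0 t w)%:Z = B] `&` Ecnd
    = \bigcup_(z in [set` condz]) Ez z.
  apply/seteqP; split => w.
    move=> [[hA hB] H]; exists [ffun i => Z i w]; last exact: EzI.
    have [k1 k2] := key _ _ (EzI w H).
    by change (condz [ffun i => Z i w]); rewrite /condz -k1 -k2 hA hB !eqxx.
  move=> [z Hc Hz]; split; last by move=> i; have := EzP z w Hz i; case.
  have [k1 k2] := key z w Hz; rewrite /= k1 k2.
  have Hc' : condz z := Hc.
  by move: Hc'; rewrite /condz => /andP [/eqP -> /eqP ->].
have Pnum : fine (P ([set w | (D1bar T1 T0 Z C1 C0 t w)%:Z = A /\
                    (N1bar T1 T0 Z C1 C0 t w)%:Z = B] `&` Ecnd))
    = \sum_z (if condz z then \prod_i a i (z i) else 0).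
  rewrite Num_eq (fin_add P _ mEz disj).
  by rewrite (eq_bigr _ (fun z _ => PEz z)) sumEFin /= -big_mkcond.
rewrite Pnum Pden.
have PE : P Ecnd = (\prod_i (a i true + a i false))%:E.
  by rewrite -Pden fineK // Ecnd_eq (fin_add P _ mEz disj) (eq_bigr _ (fun z _ => PEz z)) sumEFin.
have hnz i : a i true + a i false != 0.
  have : \prod_i (a i true + a i false) != 0.
    by move: hpos; rewrite PE lte_fin => /gt_eqF ->.
  by move/prodf_neq0 => /(_ i isT).
have Scase i : Sx i = set0 \/ (((x i).1 -> (x i).2) /\ ((x i).2 -> Sx i = [set c | (t%:E <= c)%E])).
{ rewrite SxE.
  have hTt : (T1 i == t) -> (t <= T1 i) by move/eqP->.
  case: (x i) => x1 x2 /=.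
  move: hTt; case: (T1 i == t); case: (t <= T1 i) => hT; try by case: (hT isT).
  all: case: x1; case: x2.
  all: try (left; apply/seteqP; split => c /=; case: (t%:E <= c)%E => //=; by move=> []).
  all: right; split; first done; move=> hx2; try discriminate.
  all: apply/seteqP; split => c /=; case: (t%:E <= c)%E => //=; try (by move=> []); by move=> _.
}
have aS0 i : Sx i = set0 -> a i true + a i false = 0.
  move=> h; have E b : EC i b = set0.
    by rewrite /EC /Sb h; apply/seteqP; split => w //=; case: b.
  by rewrite /a !E measure0 /= !mulr0 addr0.
have hgood i : ((x i).1 -> (x i).2) /\ ((x i).2 -> Sx i = [set c | (t%:E <= c)%E]).
  case: (Scase i) => // h; by move: (hnz i); rewrite aS0 // eqxx.
pose r1 := p1 * G1 t; pose r0 := (1 - p1) * G0 t.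
have hu i : (x i).2 -> a i false = r0 /\ a i true = r1.
  move=> h2; have hS := (hgood i).2 h2.
  have E1 : EC i true = [set w | (t%:E <= C1 i w)%E] by rewrite /EC /Sb hS.
  have E0 : EC i false = [set w | (t%:E <= C0 i w)%E] by rewrite /EC /Sb hS.
  have Z1 : EZ i true = [set w | Z i w] by [].
  have Z0 : EZ i false = ~` [set w | Z i w].
    apply/seteqP; split => w; rewrite /EZ /preimage /=; case: (Z i w) => //.
  rewrite /a E1 E0 Z1 Z0 hG1 hG0 probability_setC ?hZ //=; last exact: (mEZ i true).
pose dd i := (x i).1; pose uu i := (x i).2.
have hdu i : dd i -> uu i := (hgood i).1.
pose Mx := (\sum_i (uu i && ~~ dd i))%N.
have NxE : Nx = (Dx + Mx)%N.
  rewrite /Nx /Dx /Mx -big_split /=; apply: eq_bigr => i _; move: (hdu i).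
  by rewrite /dd /uu; case: (x i).1; case: (x i).2 => //= /(_ isT).
pose K := \prod_(i | ~~ uu i) (a i false + a i true).
have Den : \prod_i (a i true + a i false) = (r1 + r0) ^+ Nx * K.
  have P1 : \prod_(i | uu i) (a i true + a i false) = (r1 + r0) ^+ Nx.
    rewrite /Nx -prodrXr big_mkcond /=; apply: eq_bigr => i _; rewrite /uu.
    by case E: (x i).2 => /=; [have [-> ->] := hu i E; rewrite expr1 addrC | rewrite expr0].
  have P2 : \prod_(i | ~~ uu i) (a i true + a i false) = K.
    by apply: eq_bigr => i _; rewrite addrC.
  by rewrite (bigID uu) /= P1 P2.
have hden : (r1 + r0) ^+ Nx * K != 0.
  by rewrite -Den; apply/prodf_neq0 => i _; exact: hnz i.
move: hden; rewrite mulf_eq0 negb_or => /andP [hs hK].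
rewrite Den.
have bz (m : nat) (zz : int) : zz < 0 -> binz m zz = 0 :> R.
  by case: zz => // k; rewrite ltNge => /negP; case; apply: le0z_nat.
rewrite /condz; clear Pnum Num_eq condz.
case: A => a0; last first.
  by rewrite big1 ?mul0r.
case: B => b0; last first.
  rewrite big1 ?mul0r; last by move=> z _; rewrite andbF.
  by rewrite (bz _ (Negz b0 - a0%:Z)) ?mulr0 ?mul0r //; rewrite NegzE; lia.
case: (leqP a0 b0) => hab; last first.
  rewrite big1 ?mul0r; last first.
    move=> z _; case: eqP => // -[h1]; case: eqP => // -[h2].
    have : (\sum_i (z i && (x i).1) <= \sum_i (z i && (x i).2))%N.
      apply: leq_sum => i _; move: (hdu i); rewrite /dd /uu.
      by case: (z i); case: (x i).1; case: (x i).2 => //= /(_ isT).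
    by rewrite h1 h2 leqNgt hab.
  by rewrite (bz _ (b0%:Z - a0%:Z)) ?mulr0 ?mul0r //; lia.
have cond_eq z : (((\sum_i (z i && (x i).1))%:Z == a0%:Z) && ((\sum_i (z i && (x i).2))%:Z == b0%:Z)) = ((\sum_i (z i && dd i))%N == a0) &&
                            ((\sum_i (z i && uu i && ~~ dd i))%N == b0 - a0)%N.
  have hsum : (\sum_i (z i && uu i) = \sum_i (z i && dd i) + \sum_i (z i && uu i && ~~ dd i))%N.
    rewrite -big_split; apply: eq_bigr => i _; move: (hdu i); rewrite /dd /uu.
    by case: (z i); case: (x i).1; case: (x i).2 => //= /(_ isT).
  rewrite hsum !eqz_nat; case: eqP => [->|] //=.
  by apply/eqP/eqP => h; [rewrite -h addKn | rewrite h subnKC].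
under eq_bigr => z _ do rewrite cond_eq.
rewrite (@comb R n a dd uu r0 r1 hdu hu a0 (b0 - a0)%N) -/Mx -/K.
have -> : (Nx - Dx)%N = Mx by rewrite NxE addKn.
rewrite subzn // /binz /=.
case: (leqP a0 Dx) => h1; last by rewrite /binw bin_small // !mul0r.
case: (leqP (b0 - a0) Mx) => h2; last by rewrite /binw (@bin_small Mx) // !(mul0r, mulr0).
have hbN : (b0 <= Nx)%N by rewrite NxE; lia.
rewrite subzn //=.
have X1 : r1 ^+ b0 = r1 ^+ a0 * r1 ^+ (b0 - a0) by rewrite -exprD subnKC.
have X2 : r0 ^+ (Nx - b0) = r0 ^+ (Dx - a0) * r0 ^+ (Mx - (b0 - a0)).
  by rewrite -exprD; congr (_ ^+ _); rewrite NxE; lia.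
have phiE : phi p1 G1 G0 t = r1 / (r1 + r0) by [].
case: (eqVneq (r1 + r0) 0) => hs0.
  have hN0 : Nx = 0%N.
    by move: hs; rewrite hs0 expf_eq0 eqxx andbT lt0n negbK => /eqP.
  have hD0 : Dx = 0%N by move: hN0; rewrite NxE; lia.
  have hM0 : Mx = 0%N by move: hN0; rewrite NxE; lia.
  have ha0 : a0 = 0%N by lia.
  have hb0 : b0 = 0%N by lia.
  have hD0' : (\sum_(i < n) dd i)%N = 0%N by exact: hD0.
  rewrite hD0' hD0 hM0 hN0 ha0 hb0 /binw !bin0 !expr0 !mul1r divff //.
have X3 : (r1 + r0) ^+ Nx = (r1 + r0) ^+ b0 * (r1 + r0) ^+ (Nx - b0).
  by rewrite -exprD subnKC.
have hb1 : (r1 + r0) ^+ b0 != 0 by rewrite expf_neq0.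
have hb2 : (r1 + r0) ^+ (Nx - b0) != 0 by rewrite expf_neq0.
have om : 1 - phi p1 G1 G0 t = r0 / (r1 + r0) by rewrite phiE; field.
rewrite om phiE -!exprnP; change (\sum_(i < n) dd i)%N with Dx.
rewrite !expr_div_n X3 /binw X1 X2.
by field; rewrite hb1 hb2 hK.
Qed.
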